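(* Let $C\subset\mathbb P^n_K$ be a projective curve (closed subscheme of dimension $1$) over an algebraically closed field $K$ whose $h$-vector is positive. Then the arithmetic genus $g$ of $C$ is non-negative.
   Context: Let $S=K[x_0,\dots,x_n]$ and $I$ the saturated ideal of $C$. The Hilbert series $\sum_t\dim_K(S/I)_tz^t$ equals $h(z)/(1-z)^2$ with $h(z)=h_0+\dots+h_sz^s$, $h_s\ne0$; $(h_0,\dots,h_s)$ is the $h$-vector, positive if $h_i>0$ for all $i$. The Hilbert polynomial of $C$ is $P_C(t)=\deg(C)\,t+1-g$, which defines the arithmetic genus $g$. *)

(* Defs.v *)
From mathcomp Require Import all_boot all_order all_algebra.
From mathcomp Require Import mpoly.
Set Implicit Arguments.
Unset Strict Implicit.
Unset Printing Implicit Defensive.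
Import GRing.Theory Num.Theory.
Local Open Scope ring_scope.

(* The polynomial ring S = K[x_0, ..., x_n] is {mpoly K[n.+1]}. *)

Definition is_ideal (K : fieldType) (n : nat) (I : pred {mpoly K[n.+1]}) : Prop :=
  [/\ 0 \in I,
      (forall f g, f \in I -> g \in I -> f + g \in I) &
      (forall f g, g \in I -> f * g \in I)].

Definition is_homogeneous_ideal (K : fieldType) (n : nat)
  (I : pred {mpoly K[n.+1]}) : Prop :=
  is_ideal I /\ forall f d, f \in I -> pihomog mdeg d f \in I.

(* I is saturated w.r.t. the irrelevant ideal m = (x_0,...,x_n):
   (I : m^oo) = I, i.e. if m^k f is contained in I for some k then f is in I.
   m^k is the ideal spanned by the homogeneous polynomials of degree k. *)
Definition is_saturated (K : fieldType) (n : nat) (I : pred {mpoly K[n.+1]}) : Prop :=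
  forall f, (exists k : nat, forall g, g \is k.-homog -> g * f \in I) -> f \in I.

(* A family of m homogeneous polynomials of degree t whose classes in
   (S/I)_t are K-linearly independent. *)
Definition indep_mod (K : fieldType) (n : nat) (I : pred {mpoly K[n.+1]})
  (t m : nat) : Prop :=
  exists F : 'I_m -> {mpoly K[n.+1]},
    (forall i, F i \is t.-homog) /\
    forall c : 'I_m -> K, (\sum_(i < m) c i *: F i) \in I -> forall i, c i = 0.

(* hilb_fn I t m : dim_K (S/I)_t = m. *)
Definition hilb_fn (K : fieldType) (n : nat) (I : pred {mpoly K[n.+1]})
  (t m : nat) : Prop :=
  indep_mod I t m /\ ~ indep_mod I t m.+1.

(* Coefficients of h(z) = (1-z)^2 * sum_t HF(t) z^t, i.e. the second
   difference of the Hilbert function (with HF(-1) = HF(-2) = 0). *)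
Definition hvec (HF : nat -> nat) (i : nat) : int :=
  match i with
  | 0 => (HF 0)%:Z
  | 1 => (HF 1)%:Z - 2 * (HF 0)%:Z
  | k.+2 => (HF k.+2)%:Z - 2 * (HF k.+1)%:Z + (HF k)%:Z
  end.

Definition hvec_positive (HF : nat -> nat) : Prop :=
  exists s : nat, (forall i, (i <= s)%N -> 0 < hvec HF i) /\
                  (forall i, (s < i)%N -> hvec HF i = 0).

(* The Hilbert polynomial of S/I is deg * t + 1 - g with deg > 0
   (so C has dimension 1); this defines the arithmetic genus g. *)
Definition hilb_poly_curve (HF : nat -> nat) (deg : nat) (g : int) : Prop :=
  (0 < deg)%N /\
  exists t0 : nat, forall t : nat, (t0 <= t)%N ->
    (HF t)%:Z = (deg * t)%:Z + 1 - g.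

(* Main.v *)
Require Import Defs.
From mathcomp Require Import all_boot all_order all_algebra.
From mathcomp Require Import mpoly.
From mathcomp Require Import zify ring.
Local Open Scope ring_scope.
Import Order.TTheory GRing.Theory Num.Theory.

Lemma homog0_const (K : fieldType) (n : nat) (p : {mpoly K[n.+1]}) :
  p \is 0.-homog -> p = (p@_0%MM)%:MP.
Proof.
move=> hp; apply/mpolyP=> m; rewrite mcoeffC.
have [->|nz] := eqVneq m 0%MM; first by rewrite mulr1.
rewrite mulr0; apply: (dhomog_nemf_coeff hp).
by rewrite mdeg_eq0.
Qed.

Lemma HF0_le1 (K : fieldType) (n : nat) (I : pred {mpoly K[n.+1]})
  (HI : is_homogeneous_ideal I) m : indep_mod I 0 m -> (m <= 1)%N.
Proof.
case: HI => [[I0 _ _] _].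
move=> Hm; rewrite leqNgt; apply/negP => m2; case: Hm => F [HF Hind].
have h0 : (0 < m)%N by apply: leq_trans m2.
pose i0 := Ordinal h0; pose i1 := Ordinal m2.
have ne : i1 != i0 by [].
set a := (F i0)@_0%MM; set b := (F i1)@_0%MM.
have Fi0 : F i0 = a%:MP by apply: homog0_const.
have Fi1 : F i1 = b%:MP by apply: homog0_const.
have [a0|anz] := eqVneq a 0.
  pose c := fun i : 'I_m => if i == i0 then (1:K) else 0.
  have := Hind c; rewrite (bigD1 i0) //= big1 => [|i /negbTE ni]; last by rewrite /c ni scale0r.
  rewrite /c eqxx scale1r addr0 Fi0 a0 => /(_ I0 i0).
  by rewrite eqxx => /eqP; rewrite oner_eq0.
pose c := fun i : 'I_m => if i == i0 then b else if i == i1 then - a else 0.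
have := Hind c; rewrite (bigD1 i0) //= (bigD1 i1) //= big1 => [|i /andP[/negbTE n1 /negbTE n0]]; last by rewrite /c n1 n0 scale0r.
rewrite /c eqxx (negbTE ne) eqxx Fi0 Fi1 addr0 -!mul_mpolyC -!mpolyCM mulNr mulrC -mpolyCD subrr.
move=> /(_ I0 i1); rewrite (negbTE ne) eqxx => /eqP; rewrite oppr_eq0 (negbTE anz).
by [].
Qed.

Theorem proposition1p4 (K : closedFieldType) (n : nat)
  (I : pred {mpoly K[n.+1]})
  (HI : is_homogeneous_ideal I) (Hsat : is_saturated I)
  (HF : nat -> nat) (HHF : forall t, hilb_fn I t (HF t))
  (deg : nat) (g : int) (Hcurve : hilb_poly_curve HF deg g)
  (Hpos : hvec_positive HF) :
  0 <= g.
Proof.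
have H0 : (HF 0 <= 1)%N by apply: (@HF0_le1 _ _ _ HI); case: (HHF 0).
have hnn : forall i, 0 <= hvec HF i.
  case: Hpos => s [Hl Hr] i; case: (leqP i s) => his.
    exact: ltW (Hl i his).
  by rewrite Hr.
pose H t := (HF t)%:Z.
pose Q (t : nat) := H t.+1 - (t.+1)%:Z * (H t.+1 - H t).
have Qle : forall t, Q t <= 1.
  elim=> [|t IH].
    rewrite /Q /H mul1r opprB addrC subrK.
    by rewrite lez_nat.
  have e : Q t.+1 = Q t - (t.+1)%:Z * hvec HF t.+2.
    rewrite /Q /hvec /H; ring.
  rewrite e; apply: le_trans IH.
  rewrite lerBlDr lerDl; apply: mulr_ge0 => //.
case: Hcurve => _ [t0 Ht0].
have := Qle t0; rewrite /Q /H (Ht0 t0.+1 (leqW (leqnn _))) (Ht0 t0 (leqnn _)).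
have -> : (deg * t0.+1)%:Z + 1 - g - (t0.+1)%:Z * ((deg * t0.+1)%:Z + 1 - g - ((deg * t0)%:Z + 1 - g)) = 1 - g.
  rewrite !PoszM -addn1 PoszD; ring.
by rewrite lerBlDr lerDl.
Qed.
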